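(* For every sufficiently large integer $n$ (in particular whenever $2ne^{-n/80}+n^{\sqrt n}2^{-(n-1)}+n^{n/7+1}2^{-n^2/20}<1$) there exists a tournament $F_0$ on $n$ vertices such that: (I) every vertex of $F_0$ has out-degree at most $2n/3$ and in-degree at most $2n/3$; (II) there are no disjoint sets $A_1,A_2\subseteq V(F_0)$ with $|A_1|=|A_2|=\lceil\sqrt n\,\rceil$ such that $(a_1,a_2)$ is an arc of $F_0$ for all $a_1\in A_1$, $a_2\in A_2$; (III) for every $S\subseteq V(F_0)$ with $|S|\ge \frac{2n}{13}-\sqrt n$, the induced sub-tournament $F_0[S]$ contains a directed cycle.
   Context: A tournament is a loopless digraph in which every pair of distinct vertices is joined by exactly one arc. For $S\subseteq V(F_0)$, $F_0[S]$ is the induced sub-digraph on $S$. *)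

(* Defs.v *)
From Stdlib Require Import Reals.

Local Open Scope R_scope.
Definition size_condition (n : nat) : Prop :=
  (2 * INR n * exp (- (INR n / 80))
   + Rpower (INR n) (sqrt (INR n)) * Rpower 2 (- (INR n - 1))
   + Rpower (INR n) (INR n / 7 + 1) * Rpower 2 (- (INR n * INR n / 20)) < 1)%R.
Local Close Scope R_scope.

From mathcomp Require Import all_boot.
Set Implicit Arguments. Unset Strict Implicit. Unset Printing Implicit Defensive.

(* A tournament on vertex set 'I_n: loopless, and each pair of distinct
   vertices joined by exactly one arc.  [F x y] means (x,y) is an arc. *)
Definition is_tournament (n : nat) (F : rel 'I_n) : Prop :=
  (forall x, ~~ F x x) /\
  (forall x y, x != y -> (F x y || F y x) && ~~ (F x y && F y x)).

Definition outdeg (n : nat) (F : rel 'I_n) (x : 'I_n) : nat := #|[set y | F x y]|.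
Definition indeg (n : nat) (F : rel 'I_n) (x : 'I_n) : nat := #|[set y | F y x]|.

Definition ceil_sqrt (n : nat) : nat := Nat.sqrt_up n.

Definition has_dicycle_in (n : nat) (F : rel 'I_n) (S : {set 'I_n}) : Prop :=
  exists s : seq 'I_n, [/\ s != [::], uniq s, all (fun v => v \in S) s & cycle F s].

(* Main.v *)
Require Import Defs.
From Stdlib Require Import Reals.
From mathcomp Require Import all_boot.
From Stdlib Require Import Lra Lia Classical.
From mathcomp Require Import zify.
Set Implicit Arguments. Unset Strict Implicit. Unset Printing Implicit Defensive.

Definition Fr n (f : {ffun 'I_n * 'I_n -> bool}) : rel 'I_n :=
  fun x y => if (x < y)%N then f (x, y) else if (y < x)%N then ~~ f (y, x) else false.
Definition ed n (x y : 'I_n) : 'I_n * 'I_n := if (x < y)%N then (x, y) else (y, x).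

Lemma Fr_ed n f (x y : 'I_n) : x != y -> Fr f x y = (f (ed x y) == ((ed x y).1 == x)).
Proof.
rewrite /Fr /ed => nxy; case: (ltngtP x y) => h /=.
- by rewrite eqxx; case: (f _).
- have -> : (y == x) = false by apply/eqP => e; rewrite e ltnn in h.
  by case: (f _).
- by move/eqP: nxy; case; apply: val_inj.
Qed.

Lemma Fr_irr n f (x : 'I_n) : Fr f x x = false.
Proof. by rewrite /Fr ltnn. Qed.

Lemma Fr_sym n f (x y : 'I_n) : x != y -> Fr f y x = ~~ Fr f x y.
Proof.
rewrite /Fr => nxy; case: (ltngtP x y) => h //=; first by rewrite negbK.
by move/eqP: nxy; case; apply: val_inj.
Qed.

Lemma ed_prop n (x y : 'I_n) : x != y ->
  ((ed x y).1 < (ed x y).2)%N && (((ed x y).1 == x) || ((ed x y).2 == x)).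
Proof.
rewrite /ed => nxy; case: (ltngtP x y) => h /=; rewrite ?eqxx ?orbT ?h //.
by move/eqP: nxy; case; apply: val_inj.
Qed.

Lemma ed_inj n (x y y' : 'I_n) : ed x y = ed x y' -> y = y'.
Proof.
rewrite /ed; case: (ltnP x y) => h1; case: (ltnP x y') => h2 e; injection e; intros; subst; try done; apply: val_inj; lia.
Qed.

Lemma distr (T : finType) (c : T -> bool -> nat) :
  \sum_(f : {ffun T -> bool}) \prod_(e : T) c e (f e) = \prod_(e : T) (c e true + c e false).
Proof. by rewrite -bigA_distr_bigA; apply: eq_bigr => e _; rewrite big_bool. Qed.

Lemma prod_if (T : finType) (E : {set T}) a b :
  \prod_(e : T) (if e \in E then a else b) = a ^ #|E| * b ^ #|~: E|.
Proof.
rewrite (bigID (mem E)) /=.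
rewrite (eq_bigr (fun => a)); last by move=> i ->.
rewrite [X in _ * X](eq_bigr (fun => b)); last by move=> i /negbTE ->.
rewrite !prod_nat_const; congr (_ * _ ^ _); apply: eq_card => i; by rewrite !inE.
Qed.

Lemma count_weight (T : finType) (c : T -> bool -> nat) (B : {set {ffun T -> bool}}) w0 :
  (forall f, f \in B -> w0 <= \prod_(e : T) c e (f e)) ->
  #|B| * w0 <= \prod_(e : T) (c e true + c e false).
Proof.
move=> H; rewrite -distr -sum_nat_const.
apply: (@leq_trans (\sum_(f in B) \prod_(e : T) c e (f e))); first exact: leq_sum.
by rewrite [X in _ <= X](bigID (mem B)) /= leq_addr.
Qed.


Lemma card_D n : #|{: 'I_n * 'I_n}| = n * n.
Proof. by rewrite card_prod card_ord. Qed.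

Lemma deg_bad n (x : 'I_n) (dir : bool) t :
  #|[set f : {ffun 'I_n * 'I_n -> bool} |
      (t <= #|[set y | if dir then Fr f x y else Fr f y x]|)%N]| * 2 ^ t
  <= 3 ^ n.-1 * 2 ^ (n * n - n.-1).
Proof.
set E := [set e : 'I_n * 'I_n | (e.1 < e.2)%N && ((e.1 == x) || (e.2 == x))].
pose g := fun e : 'I_n * 'I_n => ((e.1 == x) == dir).
pose c := fun e j => if e \in E then (if j == g e then 2 else 1) else 1.
have EE : E = ed x @: [set~ x].
  apply/setP => e; rewrite inE.
apply/idP/imsetP.
  - case: e => [a b].
    move=> /andP[ab /orP[ax | bx]]; simpl in *.
    + move/eqP: ax => ax; subst a.
      exists b.
        by rewrite !inE; apply: contraTneq ab => ->; rewrite ltnn.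
      by rewrite /ed ab.
    + move/eqP: bx => bx; subst b.
      exists a.
        by rewrite !inE; apply: contraTneq ab => ->; rewrite ltnn.
      by rewrite /ed ltnNge (ltnW ab).
  - case=> y; rewrite !inE eq_sym => nxy ->; exact: ed_prop.
have cE : #|E| = n.-1.
  rewrite EE card_imset; last exact: ed_inj.
  by rewrite cardsC1 card_ord.
have cCE : #|~: E| = n * n - n.-1 by rewrite -cE cardsCs setCK card_D.
have := @count_weight _ c [set f : {ffun 'I_n * 'I_n -> bool} |
      (t <= #|[set y | if dir then Fr f x y else Fr f y x]|)%N] (2 ^ t).
have -> : \prod_(e : 'I_n * 'I_n) (c e true + c e false) =
          \prod_(e : 'I_n * 'I_n) (if e \in E then 3 else 2).
  by apply: eq_bigr => e _; rewrite /c; case: (e \in E); case: (g e).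
rewrite prod_if cE cCE; apply.
move=> f; rewrite inE => ht.
set Z := [set e in E | f e == g e].
have -> : \prod_(e : 'I_n * 'I_n) c e (f e) = \prod_(e : 'I_n * 'I_n) (if e \in Z then 2 else 1).
  by apply: eq_bigr => e _; rewrite /c [e \in Z]inE; case: (e \in E); case: (f e == g e).
rewrite prod_if exp1n muln1 leq_exp2l //.
apply: (leq_trans ht).
set Y := [set y | _].
rewrite -(card_imset _ (@ed_inj n x)); apply: subset_leq_card.
apply/subsetP => e /imsetP[y]; rewrite inE => hy ->.
have nxy : x != y.
  by apply/eqP => exy; move: hy; rewrite -exy Fr_irr if_same.
rewrite !inE ed_prop //=.
rewrite /g; move: hy; destruct dir.
- by rewrite Fr_ed // eqb_id.
- rewrite Fr_sym // Fr_ed //.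
  by case: (f _); case: (_ == x).
Qed.


Lemma pair_bad n (A1 A2 : {set 'I_n}) : [disjoint A1 & A2] ->
  #|[set f : {ffun 'I_n * 'I_n -> bool} |
      [forall a1 in A1, forall a2 in A2, Fr f a1 a2]]| * 2 ^ (#|A1| * #|A2|)
  <= 2 ^ (n * n).
Proof.
move=> dA.
have neq a1 a2 : a1 \in A1 -> a2 \in A2 -> a1 != a2.
  by move=> h1 h2; apply: contraTneq h2 => <-; rewrite (disjointFr dA h1).
set E := [set ed p.1 p.2 | p in setX A1 A2].
pose g := fun e : 'I_n * 'I_n => e.1 \in A1.
pose c := fun e (j : bool) => if e \in E then nat_of_bool (j == g e) else 1.
have cE : #|E| = #|A1| * #|A2|.
  rewrite card_in_imset ?cardsX //.
  case=> a1 a2; case=> b1 b2; rewrite !inE /= => /andP[h1 h2] /andP[k1 k2].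
  rewrite /ed; case: (ltnP a1 a2) => l1; case: (ltnP b1 b2) => l2 e;
    injection e => e2 e1; subst => //.
  - by move: (neq _ _ h1 k2); rewrite eqxx.
  - by move: (neq _ _ h1 k2); rewrite eqxx.
have cCE : #|~: E| = n * n - #|E| by rewrite cardsCs setCK card_D.
have Ele : #|E| <= n * n by rewrite -card_D max_card.
have := @count_weight _ c [set f : {ffun 'I_n * 'I_n -> bool} |
      [forall a1 in A1, forall a2 in A2, Fr f a1 a2]] 1.
have -> : \prod_(e : 'I_n * 'I_n) (c e true + c e false) =
          \prod_(e : 'I_n * 'I_n) (if e \in E then 1 else 2).
  by apply: eq_bigr => e _; rewrite /c; case: (e \in E); case: (g e).
rewrite prod_if exp1n mul1n muln1 cCE => H.
rewrite -cE.
apply: (@leq_trans (2 ^ (n * n - #|E|) * 2 ^ #|E|)).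
  rewrite leq_mul2r; apply/orP; right; apply: H.
  move=> f; rewrite inE => /forallP hf.
  rewrite big1 // => e _; rewrite /c.
  case: ifP => // /imsetP [[a1 a2]]; rewrite inE /= => /andP[h1 h2] ->.
  have := hf a1; rewrite h1 /= => /forallP /(_ a2); rewrite h2 /=.
  rewrite Fr_ed ?neq // /g.
  suff -> : ((ed a1 a2).1 == a1) = ((ed a1 a2).1 \in A1) by move=> ->.
  rewrite /ed; case: (ltnP a1 a2) => _ /=; first by rewrite eqxx h1.
  by rewrite (disjointFl dA h2) eq_sym (negbTE (neq _ _ h1 h2)).
by rewrite -expnD subnK.
Qed.


Lemma L_exp j : 20 <= j -> 5000 * j < 2 ^ j.
Proof.
move=> hj; rewrite -(subnKC hj) expnD.
have h10 : 2 ^ 20 = 1024 * 1024.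
  rewrite (_ : 20 = 10 + 10); last by [].
  rewrite expnD; congr (_ * _).
have hk := ltn_expl (j - 20) (isT : 1 < 2).
rewrite h10; set X := 2 ^ (j - 20) in hk *; lia.
Qed.

Lemma L_deg n : 481 <= n -> 4 * n * 3 ^ n.-1 < 2 ^ (n.-1 + ((2 * n) %/ 3).+1).
Proof.
move=> hn.
set m := n.-1; set t := ((2 * n) %/ 3).+1.
set q := m %/ 5; set r := m %% 5.
have hm : m = q * 5 + r by rewrite /q /r -divn_eq.
have hr : r < 5 by rewrite /r ltn_mod.
have h3 : 3 ^ m <= 81 * 2 ^ (8 * q).
  rewrite hm expnD mulnC (mulnC q 5) (expnM 3 5 q) (expnM 2 8 q).
  apply: leq_mul.
    by apply: (@leq_trans (3 ^ 4)); [apply: leq_pexp2l => //; lia | ].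
  case: q {hm} => [|q'] //; by rewrite leq_exp2r.
set j := m + t - 8 * q.
have hj : m + t = 8 * q + j by rewrite /j subnKC //; rewrite /m /t /q; lia.
have j20 : 20 <= j by rewrite /j /m /t /q; lia.
have jn : 324 * n <= 5000 * j by rewrite /j /m /t /q; lia.
rewrite hj expnD.
apply: (@leq_ltn_trans (324 * n * 2 ^ (8 * q))).
  move: h3; set A := 3 ^ m; set B := 2 ^ (8 * q); nia.
rewrite mulnC ltn_mul2l expn_gt0 /=.
exact: (leq_ltn_trans jn (L_exp j20)).
Qed.

Lemma L4 s : 18 <= s -> s * s * s * s <= 2 ^ s.-1.
Proof.
move=> hs; rewrite -(subnKC hs); elim: (s - 18) => [|k IH].
  by rewrite (_ : 2 ^ 17 = 131072).
rewrite addnS /= expnS.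
apply: (@leq_trans (2 * ((18 + k) * (18 + k) * (18 + k) * (18 + k)))).
  nia.
by rewrite leq_mul2l IH.
Qed.

Lemma L_pair s n : 18 <= s -> n <= s * s -> 2 * n ^ (2 * s) < 2 ^ (s * s).
Proof.
move=> hs hn.
apply: (@leq_ltn_trans (2 * 2 ^ (s.-1 * s))).
  rewrite leq_mul2l /=.
  apply: (@leq_trans ((s * s) ^ (2 * s))).
    by rewrite leq_exp2r //; lia.
  rewrite expnM expnM leq_exp2r; last by lia.
  by rewrite expnS expn1 !mulnA L4.
rewrite -expnS ltn_exp2l //; nia.
Qed.


Lemma card_range M lo hi : hi <= M.+1 ->
  #|[set k : 'I_M.+1 | lo <= k < hi]| = hi - lo.
Proof.
move=> hM.
have -> : [set k : 'I_M.+1 | lo <= k < hi] =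
          [set (inord (lo + nat_of_ord i) : 'I_M.+1) | i : 'I_(hi - lo)].
  apply/setP => k; rewrite inE; apply/idP/imsetP.
  - move=> /andP[h1 h2].
    have hk : k - lo < hi - lo by lia.
    exists (Ordinal hk) => //; apply: val_inj; move: (ltn_ord k) => hk0; rewrite /= inordK; lia.
  - case=> i _ ->; move: (ltn_ord i) => hi0; rewrite inordK; lia.
rewrite card_imset ?card_ord //.
move=> i j /(congr1 (@nat_of_ord _)).
move: (ltn_ord i) (ltn_ord j) => hi0 hj0.
rewrite !inordK; try lia.
move=> e; apply: val_inj => /=; lia.
Qed.

Lemma trans_sets n (F : rel 'I_n) (S : {set 'I_n}) s :
  is_tournament F -> 2 * s <= #|S| -> ~ has_dicycle_in F S ->
  exists A1 A2 : {set 'I_n}, [/\ [disjoint A1 & A2], #|A1| = s, #|A2| = s &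
     forall a1 a2, a1 \in A1 -> a2 \in A2 -> F a1 a2].
Proof.
move=> [irr tour] hS nocyc.
have ne u v : F u v -> u != v.
  by move=> h; apply: contraTneq h => ->; rewrite (negbTE (irr v)).
have tot u v : u != v -> F u v || F v u by move=> /tour /andP[].
have asym u v : F u v -> F v u = false.
  move=> h; move: (tour _ _ (ne _ _ h)) => /andP[_]; rewrite h /=; exact: negbTE.
have trans u v w : u \in S -> v \in S -> w \in S -> F u v -> F v w -> F u w.
  move=> hu hv hw huv hvw; apply/negPn/negP => huw.
  have nuw : u != w by apply: contraTneq hvw => <-; rewrite asym.
  have hwu : F w u by move: (tot _ _ nuw); rewrite (negbTE huw).
  apply: nocyc; exists [:: u; v; w]; split => //.
  - rewrite /= !inE negb_or ne //= andbT (ne _ _ hvw) andbT.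
    exact: nuw.
  - by rewrite /= hu hv hw.
  - by rewrite /= huv hvw hwu.
pose r v := #|[set u in S | F u v]|.
have rlt u v : u \in S -> v \in S -> F u v -> r u < r v.
  move=> hu hv huv; apply: proper_card; apply/properP; split.
    apply/subsetP => w; rewrite !inE => /andP[hw hwu]; rewrite hw.
    exact: trans hwu huv.
  by exists u; rewrite !inE ?hu ?huv ?(negbTE (irr u)).
have rS v : v \in S -> r v < #|S|.
  move=> hv; apply: proper_card; apply/properP; split.
    by apply/subsetP => w; rewrite !inE => /andP[].
  by exists v; rewrite // !inE (negbTE (irr v)) andbF.
pose m := #|S|.
pose rho v : 'I_m.+1 := inord (r v).
have rhoK v : v \in S -> nat_of_ord (rho v) = r v.
  by move=> hv; rewrite /rho inordK // ltnS ltnW // rS.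
have rinj : {in S &, injective rho}.
  move=> u v hu hv /(congr1 (@nat_of_ord _)); rewrite !rhoK // => e.
  apply/eqP; apply/negP => /negP nuv.
  case/orP: (tot _ _ nuv) => h.
    by move: (rlt _ _ hu hv h); rewrite e ltnn.
  by move: (rlt _ _ hv hu h); rewrite e ltnn.
have IL : rho @: S = [set k : 'I_m.+1 | 0 <= k < m].
  apply/eqP; rewrite eqEcard; apply/andP; split.
    by apply/subsetP => k /imsetP[v hv ->]; rewrite inE rhoK ?rS.
  by rewrite card_range // subn0 card_in_imset.
have crange lo hi : lo <= hi <= m -> #|[set v in S | lo <= r v < hi]| = hi - lo.
  move=> /andP[h1 h2].
  have E : rho @: [set v in S | lo <= r v < hi] = [set k : 'I_m.+1 | lo <= k < hi].
    apply/setP => k; rewrite [RHS]inE; apply/imsetP/idP.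
    - by case=> v; rewrite inE => /andP[hv hr] ->; rewrite rhoK.
    - move=> hk.
      have : k \in rho @: S by rewrite IL inE; lia.
      case/imsetP => v hv ek; exists v => //; rewrite inE hv -rhoK // -ek.
      exact: hk.
  rewrite -(@card_in_imset _ _ rho); last first.
    by move=> u v; rewrite !inE => /andP[hu _] /andP[hv _]; exact: rinj.
  rewrite E card_range //; exact: leqW.
exists [set v in S | 0 <= r v < s], [set v in S | s <= r v < s + s]; split.
- rewrite disjoint_subset; apply/subsetP => v; rewrite !inE => /andP[_ h1]; apply/negP => /andP[_ h2]; lia.
- by rewrite crange ?subn0 //; lia.
- by rewrite crange ?addnK //; lia.
- move=> a1 a2; rewrite !inE => /andP[h1 l1] /andP[h2 l2].
  have na : a1 != a2 by apply/eqP => e; subst; lia.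
  case/orP: (tot _ _ na) => // h.
  have := rlt _ _ h2 h1 h; lia.
Qed.


Section RealPart.
Local Open Scope R_scope.

Lemma lowb (a n : nat) : (a <= n)%coq_nat -> IZR (Z.of_nat a) <= INR n.
Proof. intros h. rewrite -INR_IZR_INZ. now apply le_INR. Qed.
Lemma upb (a n : nat) : (n <= a)%coq_nat -> INR n <= IZR (Z.of_nat a).
Proof. intros h. rewrite -INR_IZR_INZ. now apply le_INR. Qed.

Lemma exp_mono x y : x <= y -> exp x <= exp y.
Proof. intros [h|h]. - left; now apply exp_increasing. - subst; lra. Qed.

Lemma exp_INR_le k : exp (INR k) <= 3 ^ k.
Proof.
induction k as [|k IH].
- simpl; rewrite exp_0; lra.
- rewrite S_INR exp_plus; simpl.
  assert (h1 := exp_le_3). assert (h2 := exp_pos (INR k)). assert (h3 := exp_pos 1).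
  rewrite Rmult_comm. apply Rmult_le_compat; lra.
Qed.

Lemma key n k : (INR n <= 80 * INR k) -> 3 ^ k <= 2 * INR n -> exp (INR n / 80) <= 2 * INR n.
Proof.
intros h1 h2. apply Rle_trans with (exp (INR k)).
- apply exp_mono; lra.
- eapply Rle_trans; [apply exp_INR_le|exact h2].
Qed.

Lemma small_exp n : (1 <= n)%coq_nat -> (n <= 480)%coq_nat -> exp (INR n / 80) <= 2 * INR n.
Proof.
intros h1 h2.
pose proof (@lowb 1 n ltac:(lia)) as hn1; cbn [Z.of_nat Pos.of_succ_nat Pos.succ] in hn1.
destruct (Nat.le_gt_cases n 40) as [h|h].
- pose proof (@upb 40 n ltac:(lia)); cbn [Z.of_nat Pos.of_succ_nat Pos.succ] in *.
  apply Rle_trans with (exp (ln 2)).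
  + apply exp_mono. pose proof ln_lt_2. lra.
  + rewrite exp_ln; lra.
- pose proof (@lowb 41 n ltac:(lia)) as hn; cbn [Z.of_nat Pos.of_succ_nat Pos.succ] in hn.
  pose proof (@upb 480 n ltac:(lia)) as hN; cbn [Z.of_nat Pos.of_succ_nat Pos.succ] in hN.
  destruct (Nat.le_gt_cases n 80).
  { pose proof (@upb 80 n ltac:(lia)); cbn [Z.of_nat Pos.of_succ_nat Pos.succ] in *; apply (@key n 1); simpl; lra. }
  pose proof (@lowb 81 n ltac:(lia)); cbn [Z.of_nat Pos.of_succ_nat Pos.succ] in *.
  destruct (Nat.le_gt_cases n 160).
  { pose proof (@upb 160 n ltac:(lia)); cbn [Z.of_nat Pos.of_succ_nat Pos.succ] in *; apply (@key n 2); simpl; lra. }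
  pose proof (@lowb 161 n ltac:(lia)); cbn [Z.of_nat Pos.of_succ_nat Pos.succ] in *.
  destruct (Nat.le_gt_cases n 240).
  { pose proof (@upb 240 n ltac:(lia)); cbn [Z.of_nat Pos.of_succ_nat Pos.succ] in *; apply (@key n 3); simpl; lra. }
  pose proof (@lowb 241 n ltac:(lia)); cbn [Z.of_nat Pos.of_succ_nat Pos.succ] in *.
  destruct (Nat.le_gt_cases n 320).
  { pose proof (@upb 320 n ltac:(lia)); cbn [Z.of_nat Pos.of_succ_nat Pos.succ] in *; apply (@key n 4); simpl; lra. }
  pose proof (@lowb 321 n ltac:(lia)); cbn [Z.of_nat Pos.of_succ_nat Pos.succ] in *.
  destruct (Nat.le_gt_cases n 400).
  { pose proof (@upb 400 n ltac:(lia)); cbn [Z.of_nat Pos.of_succ_nat Pos.succ] in *; apply (@key n 5); simpl; lra. }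
  pose proof (@lowb 401 n ltac:(lia)); cbn [Z.of_nat Pos.of_succ_nat Pos.succ] in *.
  apply (@key n 6); simpl; lra.
Qed.

Lemma size_big n : size_condition n -> (481 <= n)%coq_nat.
Proof.
unfold size_condition; intros H.
destruct (Nat.le_gt_cases 481 n) as [h|h]; [exact h|exfalso].
assert (p2 : forall x y, 0 < Rpower x y) by (intros; unfold Rpower; apply exp_pos).
destruct n as [|n'].
- simpl in H. rewrite sqrt_0 in H.
  assert (e1 : Rpower 0 0 = 1) by (unfold Rpower; rewrite Rmult_0_l; apply exp_0).
  replace (- (0 - 1)) with 1 in H by lra.
  assert (e2 : Rpower 2 1 = 2) by (apply Rpower_1; lra).
  rewrite e1 e2 in H.
  pose proof (p2 0 (0/7+1)) as q1. pose proof (p2 2 (- (0 * 0 / 20))). nra.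
- set (n := S n') in *.
  assert (he := @small_exp n ltac:(lia) ltac:(lia)).
  assert (hp := exp_pos (INR n / 80)).
  rewrite exp_Ropp in H.
  assert (hu := Rinv_r _ (Rgt_not_eq _ _ hp)).
  assert (hv := Rinv_0_lt_compat _ hp).
  assert (t1 : 1 <= 2 * INR n * / exp (INR n / 80)) by nra.
  pose proof (p2 (INR n) (sqrt (INR n))). pose proof (p2 2 (- (INR n - 1))).
  pose proof (p2 (INR n) (INR n / 7 + 1)). pose proof (p2 2 (- (INR n * INR n / 20))).
  nra.
Qed.

Lemma real_size n s m : (481 <= n)%coq_nat -> (Nat.pred s * Nat.pred s < n)%coq_nat ->
  Rge (INR m) (Rminus (Rdiv (Rmult 2 (INR n)) 13) (sqrt (INR n))) -> (2 * s <= m)%coq_nat.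
Proof.
intros hn hs hm.
set (r := sqrt (INR n)) in *.
assert (hr0 : 0 <= r) by apply sqrt_pos.
assert (hrr : r * r = INR n) by (apply sqrt_sqrt; apply pos_INR).
pose proof (@lowb 481 n hn) as h481; cbn [Z.of_nat Pos.of_succ_nat Pos.succ] in h481.
assert (hr21 : 21 <= r) by nra.
assert (hps : INR (Nat.pred s * Nat.pred s) < INR n) by (apply lt_INR; exact hs).
rewrite mult_INR in hps.
assert (hp0 := pos_INR (Nat.pred s)).
assert (hpr : INR (Nat.pred s) < r) by nra.
apply INR_le.
destruct s as [|s'].
- simpl. apply pos_INR.
- simpl Nat.pred in hpr.
  rewrite mult_INR.
  assert (e1 : INR 2 = 2) by (simpl; lra).
  assert (e2 : INR (S s') = INR s' + 1) by apply S_INR.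
  rewrite e1 e2.
  rewrite -hrr in hm.
  assert (hq : (r - 21) * (2 * r + 3) >= 0) by nra.
  assert (hq2 : 2 * (r * r) / 13 >= 3 * r + 4) by lra.
  lra.
Qed.

End RealPart.

Lemma ffact_le n s : n ^_ s <= n ^ s.
Proof. elim: s => [|s IH] //; rewrite ffactnSr expnSr; exact: leq_mul IH (leq_subr _ _). Qed.

Lemma bin_le n s : 'C(n, s) <= n ^ s.
Proof. apply: (leq_trans _ (ffact_le n s)); rewrite -bin_ffact; apply: leq_pmulr; exact: fact_gt0. Qed.

Lemma card_sum (T : finType) (B : {set T}) : #|B| = \sum_(f : T) (f \in B : nat).
Proof. by rewrite -sum1_card big_mkcond; apply: eq_bigr => f _; case: (f \in B). Qed.

Theorem lemma4p1 (n : nat) : size_condition n ->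
  exists F : rel 'I_n,
    [/\ is_tournament F,
        (* (I) *)
        (forall x, 3 * outdeg F x <= 2 * n /\ 3 * indeg F x <= 2 * n),
        (* (II) *)
        (forall A1 A2 : {set 'I_n},
            [disjoint A1 & A2] -> #|A1| = ceil_sqrt n -> #|A2| = ceil_sqrt n ->
            ~ (forall a1 a2, a1 \in A1 -> a2 \in A2 -> F a1 a2))
      & (* (III) *)
        (forall S : {set 'I_n},
            Rge (INR #|S|) (Rminus (Rdiv (Rmult 2 (INR n)) 13) (sqrt (INR n))) -> has_dicycle_in F S)].
Proof.
move=> /size_big hn0.
have hn : 481 <= n by apply/leP.
set s := ceil_sqrt n.
have [hs1 hs2] : s.-1 * s.-1 < n /\ n <= s * s.
  have := Nat.sqrt_up_spec n; rewrite /s /ceil_sqrt; lia.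
have s18 : 18 <= s by nia.
set t := ((2 * n) %/ 3).+1.
set P := [set p : {set 'I_n} * {set 'I_n} |
           [&& [disjoint p.1 & p.2], #|p.1| == s & #|p.2| == s]].
pose BO (x : 'I_n) (dir : bool) := [set f : {ffun 'I_n * 'I_n -> bool} |
      (t <= #|[set y | if dir then Fr f x y else Fr f y x]|)%N].
pose BP (p : {set 'I_n} * {set 'I_n}) := [set f : {ffun 'I_n * 'I_n -> bool} |
      [forall a1 in p.1, forall a2 in p.2, Fr f a1 a2]].
pose bad f := [exists x, (f \in BO x true) || (f \in BO x false)] || [exists p in P, f \in BP p].
have [f good | allbad] := pickP (fun f => ~~ bad f); last first.
  exfalso.
  pose X := \sum_(x : 'I_n) (#|BO x true| + #|BO x false|).
  pose Y := \sum_(p in P) #|BP p|.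
  have le1 : 2 ^ (n * n) <= X + Y.
    have -> : 2 ^ (n * n) = \sum_(f : {ffun 'I_n * 'I_n -> bool}) 1.
      by rewrite sum1_card card_ffun card_bool card_D.
    have -> : X + Y = \sum_(f : {ffun 'I_n * 'I_n -> bool})
        (\sum_(x : 'I_n) ((f \in BO x true) + (f \in BO x false) : nat)
         + \sum_(p in P) (f \in BP p : nat)).
      rewrite big_split /= /X /Y; congr (_ + _).
        rewrite exchange_big /=; apply: eq_bigr => x _.
        by rewrite big_split /= -!card_sum.
      by rewrite exchange_big /=; apply: eq_bigr => p _; rewrite -card_sum.
    apply: leq_sum => f _.
    move: (allbad f); rewrite /= => /negbFE; rewrite /bad => /orP[/existsP[x hx] | /existsP[p /andP[hp hf]]].
      rewrite (bigD1 x) //=; case/orP: hx => hx; rewrite hx /=; lia.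
    rewrite (bigD1 p) //= hf /=; lia.
  set N := n * n.
  set K := 3 ^ n.-1 * 2 ^ (N - n.-1).
  have hX : X * 2 ^ t <= n * (2 * K).
    rewrite /X big_distrl /=.
    apply: (@leq_trans (\sum_(x : 'I_n) (2 * K))).
      apply: leq_sum => x _; rewrite mulnDl mul2n -addnn; apply: leq_add; [exact: (deg_bad x true t) | exact: (deg_bad x false t)].
    by rewrite sum_nat_const card_ord.
  have hY : Y * 2 ^ (s * s) <= #|P| * 2 ^ N.
    rewrite /Y big_distrl /= -sum_nat_const; apply: leq_sum => p.
    rewrite inE => /and3P[dp /eqP c1 /eqP c2].
    by have := pair_bad dp; rewrite c1 c2.
  have hP : #|P| <= n ^ (2 * s).
    pose Ds := [set A : {set 'I_n} | #|A| == s].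
    apply: (@leq_trans #|setX Ds Ds|).
      apply: subset_leq_card; apply/subsetP => p; rewrite !inE => /and3P[_ -> ->] //.
    rewrite cardsX /Ds card_draws card_ord (mulnC 2 s) expnM expnS expn1.
    have hb := bin_le n s.
    exact: leq_mul.
  have hK : K * 2 ^ n.-1 = 3 ^ n.-1 * 2 ^ N.
    rewrite /K -mulnA -expnD subnK //; rewrite /N; nia.
  have hd := L_deg hn.
  have hp := L_pair s18 hs2.
  rewrite -/t in hd.
  have X2 : 2 * X < 2 ^ N.
    rewrite -(ltn_pmul2r (expn_gt0 2 (n.-1 + t))).
    apply: (@leq_ltn_trans (4 * n * 3 ^ n.-1 * 2 ^ N)).
      rewrite expnD.
      apply: (@leq_trans (2 * (n * (2 * K)) * 2 ^ n.-1)).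
        have := leq_mul (leq_mul (leqnn 2) hX) (leqnn (2 ^ n.-1)).
        apply: leq_trans; apply: eq_leq; nia.
      have -> : 2 * (n * (2 * K)) * 2 ^ n.-1 = 4 * n * (K * 2 ^ n.-1) by nia.
      rewrite hK; apply: eq_leq; nia.
    by rewrite mulnC ltn_mul2l expn_gt0 /= hd.
  have Y2 : 2 * Y < 2 ^ N.
    rewrite -(ltn_pmul2r (expn_gt0 2 (s * s))).
    apply: (@leq_ltn_trans (2 * n ^ (2 * s) * 2 ^ N)).
      rewrite -mulnA -(mulnA 2 _ (2 ^ N)) leq_mul2l /=.
      exact: leq_trans hY (leq_mul hP (leqnn _)).
    by rewrite mulnC ltn_mul2l expn_gt0 /= hp.
  rewrite /N in X2 Y2; lia.
move: good; rewrite /= /bad negb_or => /andP[/existsPn gO /existsPn gP].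
have tourn : is_tournament (Fr f).
  split; first by move=> x; rewrite Fr_irr.
  by move=> x y nxy; rewrite (Fr_sym f nxy); case: (Fr f x y).
have II : forall A1 A2 : {set 'I_n},
    [disjoint A1 & A2] -> #|A1| = s -> #|A2| = s ->
    ~ (forall a1 a2, a1 \in A1 -> a2 \in A2 -> Fr f a1 a2).
  move=> A1 A2 dA c1 c2 H.
  have := gP (A1, A2); rewrite negb_and !inE /= dA c1 c2 eqxx /=.
  move/negP; apply; apply/forallP => a1; apply/implyP => h1.
  apply/forallP => a2; apply/implyP => h2; exact: H.
exists (Fr f); split => //.
- move=> x; have := gO x; rewrite negb_or !inE /= -!ltnNge /outdeg /indeg => /andP[h1 h2].
  have H3 a : a < t -> 3 * a <= 2 * n.
    move=> ha; apply: (leq_trans _ (leq_divM (2 * n) 3)).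
    by rewrite mulnC leq_mul2r /=; rewrite ltnS in ha.
  by split; apply: H3.
- move=> S hS; apply: NNPP => nc.
  have h2s : 2 * s <= #|S|.
    apply/leP; apply: (real_size hn0 _ hS); apply/ltP; exact: hs1.
  have [A1 [A2 [dA c1 c2 H]]] := trans_sets tourn h2s nc.
  exact: II dA c1 c2 H.
Qed.
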